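(* Let $(A_i,\omega_i)$, $i=1,2$, be commutative baric algebras over $K$ and let $I$ be a two-sided ideal of $A_1\bowtie A_2$ with $I\subseteq\operatorname{Ker}(\omega_1\bowtie\omega_2)$. Then $I_1=A_1$ if and only if $I=\operatorname{Ker}(\omega_1\bowtie\omega_2)$.
   Context: A baric algebra over a field $K$ is a pair $(A,\omega)$ where $A$ is a (not necessarily associative) $K$-algebra and $\omega:A\to K$ is a nonzero $K$-algebra homomorphism. For baric algebras $(A_1,\omega_1),(A_2,\omega_2)$, $A_1\bowtie A_2$ denotes the vector space $A_1\oplus A_2$ with product $(a_1,a_2)(b_1,b_2)=(a_1b_1+\omega_2(b_2)a_1,\ a_2b_2+\omega_1(b_1)a_2)$, and $\omega_1\bowtie\omega_2(a_1,a_2)=\omega_1(a_1)+\omega_2(a_2)$. For $I\subseteq A_1\bowtie A_2$, $I_1=\{a_1\in A_1:\exists a_2\in A_2,\ (a_1,a_2)\in I\}$. *)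

(* Defs.v *)
(* Non-associative algebras are modelled as a K-vector
   space (lmodType K) together with a bilinear product. *)
From HB Require Import structures.
From mathcomp Require Import all_boot all_order all_algebra.
Set Implicit Arguments. Unset Strict Implicit. Unset Printing Implicit Defensive.
Import GRing.Theory.
Local Open Scope ring_scope.

Section Defs.
Variable K : fieldType.

Definition bilinear_mul (V : lmodType K) (m : V -> V -> V) : Prop :=
  (forall (a : K) (x y z : V), m (a *: x + y) z = a *: m x z + m y z) /\
  (forall (a : K) (x y z : V), m z (a *: x + y) = a *: m z x + m z y).

Definition comm_mul (V : lmodType K) (m : V -> V -> V) : Prop :=
  forall x y : V, m x y = m y x.

Definition weight_fun (V : lmodType K) (m : V -> V -> V) (w : V -> K) : Prop :=
  [/\ forall (a : K) (x y : V), w (a *: x + y) = a * w x + w y,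
      forall x y : V, w (m x y) = w x * w y
    & exists x : V, w x != 0].

Definition baric (V : lmodType K) (m : V -> V -> V) (w : V -> K) : Prop :=
  bilinear_mul m /\ weight_fun m w.

Definition bowtie_mul (V1 V2 : lmodType K) (m1 : V1 -> V1 -> V1)
  (m2 : V2 -> V2 -> V2) (w1 : V1 -> K) (w2 : V2 -> K)
  (x y : V1 * V2) : V1 * V2 :=
  (m1 x.1 y.1 + w2 y.2 *: x.1, m2 x.2 y.2 + w1 y.1 *: x.2).

Definition bowtie_w (V1 V2 : lmodType K) (w1 : V1 -> K) (w2 : V2 -> K)
  (x : V1 * V2) : K := w1 x.1 + w2 x.2.

Definition bowtie_ideal (V1 V2 : lmodType K) (m1 : V1 -> V1 -> V1)
  (m2 : V2 -> V2 -> V2) (w1 : V1 -> K) (w2 : V2 -> K)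
  (I : V1 * V2 -> Prop) : Prop :=
  [/\ I (0, 0),
      forall (a : K) (x y : V1 * V2), I x -> I y ->
        I (a *: x.1 + y.1, a *: x.2 + y.2)
    & forall x y : V1 * V2, I x ->
        I (bowtie_mul m1 m2 w1 w2 x y) /\ I (bowtie_mul m1 m2 w1 w2 y x)].

Definition proj1_set (V1 V2 : Type) (I : V1 * V2 -> Prop) : V1 -> Prop :=
  fun a1 => exists a2, I (a1, a2).

End Defs.

(* Main.v *)
Require Import Defs.
From mathcomp Require Import all_boot all_order all_algebra.
Import GRing.Theory.
Local Open Scope ring_scope.

Section H.
Variable K : fieldType.

Lemma wfacts (V : lmodType K) (m : V -> V -> V) (w : V -> K) :
  weight_fun m w ->
  [/\ w 0 = 0, (forall a x, w (a *: x) = a * w x), (forall x y, w (x + y) = w x + w y)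
   & exists e, w e = 1].
Proof.
case=> hl _ [x hx].
have w0 : w 0 = 0.
  have := hl 1 0 0; rewrite scaler0 addr0 mul1r => h.
  by apply/esym/(addrI (w 0)); rewrite addr0.
have wZ : forall a x, w (a *: x) = a * w x.
  by move=> a y; have := hl a y 0; rewrite addr0 w0 addr0.
split => //.
- by move=> y z; have := hl 1 y z; rewrite scale1r mul1r.
- exists ((w x)^-1 *: x); by rewrite wZ mulVf.
Qed.

Lemma m0l (V : lmodType K) (m : V -> V -> V) : bilinear_mul m ->
  (forall z, m 0 z = 0) /\ (forall z, m z 0 = 0).
Proof.
case=> h1 h2; split=> z.
- have := h1 1 0 0 z; rewrite scaler0 addr0 scale1r => h.
  by apply/esym/(addrI (m 0 z)); rewrite addr0.
- have := h2 1 0 0 z; rewrite scaler0 addr0 scale1r => h.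
  by apply/esym/(addrI (m z 0)); rewrite addr0.
Qed.
End H.

Theorem proposition5p3 (K : fieldType) (A1 A2 : lmodType K)
  (m1 : A1 -> A1 -> A1) (w1 : A1 -> K) (m2 : A2 -> A2 -> A2) (w2 : A2 -> K)
  (hA1 : baric m1 w1) (hA2 : baric m2 w2)
  (hc1 : comm_mul m1) (hc2 : comm_mul m2)
  (I : A1 * A2 -> Prop) (hI : bowtie_ideal m1 m2 w1 w2 I)
  (hIker : forall x, I x -> bowtie_w w1 w2 x = 0) :
  (forall a1 : A1, proj1_set I a1) <->
  (forall x : A1 * A2, I x <-> bowtie_w w1 w2 x = 0).
Proof.
case: hA1 => b1 hw1; case: hA2 => b2 hw2.
case: (@wfacts _ _ _ _ hw1) => w10 w1Z w1D [e1 he1].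
case: (@wfacts _ _ _ _ hw2) => w20 w2Z w2D [e2 he2].
case: (@m0l _ _ _ b1) => m10l m10r; case: (@m0l _ _ _ b2) => m20l m20r.
case: hI => I0 Ilin Imul.
have Ieq : forall p q, I p -> p = q -> I q by move=> p q ? <-.
have Iadd : forall x y, I x -> I y -> I (x.1 + y.1, x.2 + y.2).
  by move=> x y hx hy; apply: Ieq (Ilin 1 x y hx hy) _; rewrite !scale1r.
have Isub : forall x y, I x -> I y -> I (y.1 - x.1, y.2 - x.2).
  move=> x y hx hy; apply: Ieq (Ilin (-1) x y hx hy) _.
  by rewrite !scaleN1r [_ + y.1]addrC [_ + y.2]addrC.
split.
- move=> hp x; split; first exact: hIker.
  have key : forall a1 c2, I (w2 c2 *: a1, - (w1 a1 *: c2)).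
    move=> a1 c2; case: (hp a1) => a2 ha.
    case: (Imul _ (0, c2) ha) => P Q.
    apply: Ieq (Isub _ _ Q P) _.
    rewrite /bowtie_mul /= m10l m10r w10 scaler0 scale0r !addr0 add0r.
    by rewrite subr0 (hc2 c2 a2) opprD addrA subrr add0r.
  case: x => x1 x2; rewrite /bowtie_w /= => hx.
  have h1 := key x1 e2; rewrite he2 scale1r in h1.
  have h2 := key e1 (- (x2 + w1 x1 *: e2)); rewrite he1 scale1r opprK in h2.
  have h2' : w2 (- (x2 + w1 x1 *: e2)) = 0.
    rewrite -scaleN1r w2Z w2D w2Z he2 mulr1 addrC hx mulr0 //.
  rewrite h2' scale0r in h2.
  apply: Ieq (Iadd _ _ h1 h2) _ => /=.
  by rewrite addr0 addrC -addrA subrr addr0.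
- move=> hK a1.
  exists ((- w1 a1) *: e2); apply/hK.
  by rewrite /bowtie_w /= w2Z he2 mulr1 subrr.
Qed.
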